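(* Assume the setting in the context, and let $\mathbf d^*$ be any $\Phi_{\mathfrak B}$-optimal design with $\boldsymbol\Sigma^*=\mathbf M(\mathbf d^* )^{-1}=(c^*_{jk})$. Then for all $j,k\in\{1,\dots,m\}$: $$|c^*_{jk}|\le \alpha K\big[(\mathbf B\mathbf B')^{-1}_{jj}(\mathbf B\mathbf B')^{-1}_{kk}\big]^{1/2},$$ $$|c^*_{jk}|\le \alpha\big[\mathbf N^+_{jj}(\mathbf w^{(j+)})\,\mathbf N^+_{kk}(\mathbf w^{(k+)})\big]^{1/2},$$ $$|c^*_{jk}|\le \alpha\big[\mathbf N^+_{jj}(\mathbf w^{(j* )})\,\mathbf N^+_{kk}(\mathbf w^{(k* )})\big]^{1/2},$$ where $\mathbf A_{ij}$ denotes the $(i,j)$ entry of a matrix $\mathbf A$.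
   Context: Let $n,m,N,K$ be positive integers with $2\le m\le N\le n$, and let $\mathbf f_1,\dots,\mathbf f_n\in\mathbb R^m$ span $\mathbb R^m$. A (binary) design is $\mathbf d\in\{0,1\}^n$ with $\sum_i d_i=N$; its information matrix is $\mathbf M(\mathbf d)=\sum_{i=1}^n d_i\mathbf f_i\mathbf f_i'$. For $\ell\in\{1,\dots,K\}$ let $\mathbf B_\ell$ be a real $m\times s_\ell$ matrix, $\mathbf B=(\mathbf B_1,\dots,\mathbf B_K)$, with column space of $\mathbf B$ equal to $\mathbb R^m$ and no zero column. For positive definite $\mathbf M$, $\Phi_{\mathfrak B}(\mathbf M)=\max_{\ell}\mathrm{tr}(\mathbf B_\ell'\mathbf M^{-1}\mathbf B_\ell)$. A $\Phi_{\mathfrak B}$-optimal design minimizes $\Phi_{\mathfrak B}(\mathbf M(\mathbf d))$ over designs $\mathbf d$ with nonsingular $\mathbf M(\mathbf d)$. Let $\mathbf d_0$ be a design with nonsingular $\mathbf M(\mathbf d_0)$ and $\alpha=\Phi_{\mathfrak B}(\mathbf M(\mathbf d_0))$. For $\mathbf w\in\mathbb R^K$, $\mathbf w\ge 0$, $\sum w_\ell=1$, let $\mathbf N(\mathbf w)=\sum_\ell w_\ell\mathbf B_\ell\mathbf B_\ell'$; $\mathbf A^+$ is the Moore–Penrose pseudoinverse and $\mathbf e_j$ the $j$-th unit vector. For $j\in\{1,\dots,m\}$: write $\mathbf B^+\mathbf e_j=((\mathbf h^{(j+)}_1)',\dots,(\mathbf h^{(j+)}_K)')'$ with $\mathbf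 h^{(j+)}_\ell\in\mathbb R^{s_\ell}$, and set $w^{(j+)}_\ell=\|\mathbf h^{(j+)}_\ell\|/\sum_{t}\|\mathbf h^{(j+)}_t\|$; $\mathbf w^{(j* )}$ is a minimizer of $\mathbf e_j'\mathbf N^+(\mathbf w)\mathbf e_j$ over all such $\mathbf w$ with $\mathbf e_j\in\mathcal C(\mathbf N(\mathbf w))$. *)

(* Defs.v *)
From HB Require Import structures.
From mathcomp Require Import all_boot all_order all_algebra.
From Stdlib Require Import ClassicalEpsilon.
Set Implicit Arguments. Unset Strict Implicit. Unset Printing Implicit Defensive.
Import Order.TTheory GRing.Theory Num.Theory.
Local Open Scope ring_scope.

Section Defs.
Variable R : rcfType.

Definition is_MP_inverse p q (A : 'M[R]_(p, q)) (X : 'M[R]_(q, p)) : Prop :=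
  [/\ A *m X *m A = A, X *m A *m X = X,
      (A *m X)^T = A *m X & (X *m A)^T = X *m A].

(* The Moore-Penrose pseudoinverse A^+ (chosen by classical choice among
   the matrices satisfying the four Penrose conditions; it exists and is
   unique). *)
Definition mpinv p q (A : 'M[R]_(p, q)) : 'M[R]_(q, p) :=
  epsilon (inhabits 0) (fun X => is_MP_inverse A X).

Definition vnorm p (v : 'cV[R]_p) : R := Num.sqrt (\sum_i v i 0 ^+ 2).

Definition unitv m (j : 'I_m) : 'cV[R]_m := \col_i (i == j)%:R.

Definition info_mx n m (f : 'I_n -> 'cV[R]_m) (d : 'I_n -> bool) : 'M[R]_m :=
  \sum_(i < n | d i) f i *m (f i)^T.

Definition is_design n (N : nat) (d : 'I_n -> bool) : Prop :=
  (\sum_(i < n) (d i : nat))%N = N.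

(* Phi_B(M) = max_l tr(B_l' M^{-1} B_l); for positive definite M all traces
   are >= 0, so folding max from 0 gives the maximum over l (K >= 1). *)
Definition PhiB m K (s : 'I_K -> nat) (B_ : forall l, 'M[R]_(m, s l))
  (M : 'M[R]_m) : R :=
  \big[Num.max/0]_(l < K) \tr ((B_ l)^T *m invmx M *m B_ l).

Definition Nw m K (s : 'I_K -> nat) (B_ : forall l, 'M[R]_(m, s l))
  (w : 'I_K -> R) : 'M[R]_m :=
  \sum_(l < K) w l *: (B_ l *m (B_ l)^T).

Definition Bfull m K (s : 'I_K -> nat) (B_ : forall l, 'M[R]_(m, s l))
  : 'M[R]_(m, \sum_l s l) := mxrow B_.

Definition in_simplex K (w : 'I_K -> R) : Prop :=
  (forall l, 0 <= w l) /\ \sum_(l < K) w l = 1.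

Definition wplus m K (s : 'I_K -> nat) (B_ : forall l, 'M[R]_(m, s l))
  (j : 'I_m) : 'I_K -> R :=
  let h := mpinv (Bfull B_) *m unitv j in
  fun l => vnorm (submxcol h l) / \sum_(t < K) vnorm (submxcol h t).

End Defs.
Arguments unitv {R m} j.

(* Main.v *)
Require Import Defs.
From HB Require Import structures.
From mathcomp Require Import all_boot all_order all_algebra.
From mathcomp Require Import ring.
From Stdlib Require Import ClassicalEpsilon.
Set Implicit Arguments. Unset Strict Implicit. Unset Printing Implicit Defensive.
Import Order.TTheory GRing.Theory Num.Theory.
Local Open Scope ring_scope.

Section Aux.
Variable R : rcfType.

Lemma sumsq_eq0 (I : finType) (a : I -> R) :
  \sum_i a i ^+ 2 = 0 -> forall i, a i = 0.
Proof.
move=> H i; have := @psumr_eq0P _ I predT (fun i => a i ^+ 2).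
move=> /(_ (fun i _ => sqr_ge0 (a i)) H i isT) /eqP.
by rewrite sqrf_eq0 => /eqP.
Qed.

Lemma mxmxT_eq0 p q (A : 'M[R]_(p, q)) : A *m A^T = 0 -> A = 0.
Proof.
move=> H; apply/matrixP => i k; rewrite mxE.
have /matrixP /(_ i i) := H; rewrite !mxE => H2.
apply: (@sumsq_eq0 _ (fun k => A i k)); rewrite -[RHS]H2.
by apply: eq_bigr => l _; rewrite mxE expr2.
Qed.

Lemma rowfree_unit r k (P : 'M[R]_(r, k)) : row_free P -> P *m P^T \in unitmx.
Proof.
move=> fP; rewrite -row_free_unit -kermx_eq0; apply/rowV0P => v /sub_kermxP Hv.
have H1 : (v *m P) *m (v *m P)^T = 0.
  by rewrite trmx_mul mulmxA -(mulmxA v) Hv mul0mx.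
have H2 := mxmxT_eq0 H1.
by apply: (row_free_inj fP); rewrite H2 mul0mx.
Qed.

Lemma mp_fact p q r (L : 'M[R]_(p, r)) (Rr : 'M[R]_(r, q)) :
  L^T *m L \in unitmx -> Rr *m Rr^T \in unitmx ->
  is_MP_inverse (L *m Rr) (Rr^T *m invmx (Rr *m Rr^T) *m invmx (L^T *m L) *m L^T).
Proof.
move=> uL uR.
set X := Rr^T *m invmx (Rr *m Rr^T) *m invmx (L^T *m L) *m L^T.
have AX : L *m Rr *m X = L *m invmx (L^T *m L) *m L^T.
  rewrite /X !mulmxA -(mulmxA L Rr) -(mulmxA L (Rr *m Rr^T)) mulmxV //.
  by rewrite mulmx1.
have XA : X *m (L *m Rr) = Rr^T *m invmx (Rr *m Rr^T) *m Rr.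
  rewrite /X !mulmxA -(mulmxA _ L^T L) -(mulmxA _ _ (L^T *m L)) mulVmx //.
  by rewrite mulmx1.
split.
- by rewrite AX !mulmxA -(mulmxA _ L^T L) -(mulmxA L) mulVmx // mulmx1.
- rewrite XA /X !mulmxA -(mulmxA _ Rr Rr^T) -(mulmxA _ _ (Rr *m Rr^T)) mulVmx //.
  by rewrite mulmx1.
- by rewrite AX !trmx_mul trmxK trmx_inv trmx_mul trmxK mulmxA.
- by rewrite XA !trmx_mul trmxK trmx_inv trmx_mul trmxK mulmxA.
Qed.

Lemma mp_exists p q (A : 'M[R]_(p, q)) : exists X, is_MP_inverse A X.
Proof.
have uR : row_base A *m (row_base A)^T \in unitmx.
  by apply: rowfree_unit; exact: row_base_free.
have uL : (col_base A)^T *m col_base A \in unitmx.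
  have := @rowfree_unit _ _ (col_base A)^T; rewrite trmxK; apply.
  by rewrite /row_free mxrank_tr; have := col_base_full A; rewrite /row_full.
have := mp_fact uL uR; rewrite mulmx_base => H; eexists; exact: H.
Qed.

Lemma mpinvP p q (A : 'M[R]_(p, q)) : is_MP_inverse A (mpinv A).
Proof.
rewrite /mpinv; apply: epsilon_spec; exact: mp_exists.
Qed.

End Aux.

Section A2.
Variable R : rcfType.

Lemma sum_prod (I : finType) (f g : I -> R) :
  \sum_i \sum_j f i * g j = (\sum_i f i) * (\sum_j g j).
Proof. by rewrite mulr_suml; apply: eq_bigr => i _; rewrite mulr_sumr. Qed.

Lemma cs (I : finType) (a b : I -> R) :
  (\sum_i a i * b i) ^+ 2 <= (\sum_i a i ^+ 2) * (\sum_i b i ^+ 2).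
Proof.
have E1 : forall i j, (a i * b j - a j * b i) ^+ 2 =
   a i ^+ 2 * b j ^+ 2 + b i ^+ 2 * a j ^+ 2 - 2 * ((a i * b i) * (a j * b j)).
  by move=> i j; ring.
have H0 : 0 <= \sum_i \sum_j (a i * b j - a j * b i) ^+ 2.
  by apply: sumr_ge0 => i _; apply: sumr_ge0 => j _; exact: sqr_ge0.
have E2 : \sum_i \sum_j (a i * b j - a j * b i) ^+ 2 =
  2 * ((\sum_i a i ^+ 2) * (\sum_i b i ^+ 2) - (\sum_i a i * b i) ^+ 2).
  under eq_bigr do under eq_bigr do rewrite E1.
  under eq_bigr do rewrite sumrB big_split /=.
  rewrite sumrB big_split /= !sum_prod.
  rewrite (mulrC (\sum_i b i ^+ 2)).
  under [X in _ - X = _]eq_bigr do rewrite -mulr_sumr.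
  rewrite -mulr_sumr sum_prod expr2; ring.
move: H0; rewrite E2 pmulr_rge0 // subr_ge0 //.
Qed.
End A2.

Section A3.
Variable R : rcfType.

Definition sqn p (v : 'cV[R]_p) := \sum_i v i 0 ^+ 2.

Lemma vTv p (v : 'cV[R]_p) : (v^T *m v) 0 0 = sqn v.
Proof. by rewrite mxE; apply: eq_bigr => i _; rewrite mxE expr2. Qed.

Lemma sqn_ge0 p (v : 'cV[R]_p) : 0 <= sqn v.
Proof. by apply: sumr_ge0 => i _; exact: sqr_ge0. Qed.

Lemma trHTH n p (H : 'M[R]_(n, p)) : \tr (H^T *m H) = \sum_i \sum_q H i q ^+ 2.
Proof.
rewrite /mxtrace exchange_big; apply: eq_bigr => q _; rewrite mxE.
by apply: eq_bigr => i _; rewrite mxE expr2.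
Qed.

Lemma cs_mx n p (H : 'M[R]_(n, p)) (v : 'cV[R]_p) :
  sqn (H *m v) <= \tr (H^T *m H) * sqn v.
Proof.
rewrite trHTH mulr_suml /sqn; apply: ler_sum => i _.
rewrite mxE; exact: cs.
Qed.

Lemma key n m p (G : 'M[R]_(n, m)) (C : 'M[R]_(m, p)) (X : 'M[R]_m) (e : 'cV[R]_m) :
  let N := C *m C^T in
  (N *m X)^T = N *m X -> N *m X *m e = e ->
  (e^T *m (G^T *m G) *m e) 0 0 <= \tr (C^T *m (G^T *m G) *m C) * (e^T *m X *m e) 0 0
  /\ 0 <= (e^T *m X *m e) 0 0.
Proof.
move=> N h2 h3.
set v := C^T *m X *m e.
have ev : e = C *m v by rewrite /v !mulmxA -{1}h3.
have hN : N^T = N by rewrite /N trmx_mul trmxK.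
have XX : e^T *m X *m e = v^T *m v.
  have h4 : X^T *m N = N *m X by rewrite -{1}hN -trmx_mul.
  have h5 : e^T *m (N *m X) = e^T by rewrite -{1}h2 -trmx_mul h3.
  rewrite /v !trmx_mul trmxK !mulmxA -(mulmxA _ X^T C) -(mulmxA _ _ C^T).
  by rewrite -(mulmxA X^T) -/N h4 h5.
have L1 : e^T *m (G^T *m G) *m e = (G *m C *m v)^T *m (G *m C *m v).
  by rewrite {1 2}ev !trmx_mul !mulmxA.
have L2 : C^T *m (G^T *m G) *m C = (G *m C)^T *m (G *m C).
  by rewrite !trmx_mul !mulmxA.
rewrite L1 L2 XX !vTv; split; last exact: sqn_ge0.
exact: cs_mx.
Qed.
End A3.

Section A4.
Variable R : rcfType.

Lemma gram n m (F : 'M[R]_(n,m)) : F^T *m F \in unitmx ->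
  invmx (F^T *m F) = (F *m invmx (F^T *m F))^T *m (F *m invmx (F^T *m F)).
Proof.
move=> u; set S := invmx (F^T *m F).
rewrite trmx_mul !mulmxA -(mulmxA S^T F^T F) -(mulmxA S^T) mulmxV // mulmx1.
by rewrite /S trmx_inv trmx_mul trmxK.
Qed.

Lemma info_gram n m (f : 'I_n -> 'cV[R]_m) (d : 'I_n -> bool) :
  info_mx f d = (\matrix_(i < n) (if d i then (f i)^T else 0))^T
                *m (\matrix_(i < n) (if d i then (f i)^T else 0)).
Proof.
apply/matrixP => a b; rewrite /info_mx summxE !mxE big_mkcond.
apply: eq_bigr => i _; rewrite !mxE; case: (d i); last by rewrite !mxE mul0r.
by rewrite big_ord1 !mxE.
Qed.

Lemma unitvE m (j : 'I_m) : unitv j = delta_mx j 0 :> 'cV[R]_m.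
Proof. by apply/matrixP => a b; rewrite !mxE (ord1 b) andbT. Qed.

Lemma ejAej m (j : 'I_m) (A : 'M[R]_m) : ((unitv j)^T *m A *m unitv j) 0 0 = A j j.
Proof. by rewrite unitvE trmx_delta -rowE -colE !mxE. Qed.

Lemma gram_entry n m (G : 'M[R]_(n,m)) j k : (G^T *m G) j k = \sum_i G i j * G i k.
Proof. by rewrite mxE; apply: eq_bigr => i _; rewrite mxE. Qed.

Lemma combine (a b c x y z al : R) : 0 <= al -> 0 <= c -> x ^+ 2 <= y * z ->
  0 <= y -> 0 <= z -> y <= al * (c * a) -> z <= al * (c * b) ->
  `|x| <= al * c * Num.sqrt (a * b).
Proof.
move=> al0 c0 hx y0 z0 hy hz.
rewrite -sqrtr_sqr; apply: (le_trans (_ : _ <= Num.sqrt (y * z))); first by rewrite ler_sqrt // mulr_ge0.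
have -> : al * c * Num.sqrt (a * b) = Num.sqrt ((al * (c * a)) * (al * (c * b))).
  have -> : (al * (c * a)) * (al * (c * b)) = (al * c) ^+ 2 * (a * b) by ring.
  by rewrite (sqrtrM (a * b)) ?sqr_ge0 // sqrtr_sqr ger0_norm // mulr_ge0.
rewrite ler_sqrt; first by apply: ler_pM.
by rewrite -[X in X <= _](mulr0 0); apply: ler_pM => //; [exact: le_trans hy | exact: le_trans hz].
Qed.

Lemma bigmax_ge K (F : 'I_K -> R) l : F l <= \big[Num.max/0]_(i < K) F i.
Proof. by rewrite (bigD1 l) //= le_max lexx. Qed.

Lemma bigmax_ge0 K (F : 'I_K -> R) : 0 <= \big[Num.max/0]_(i < K) F i.
Proof. by elim/big_rec: _ => // i x _ hx; rewrite le_max hx orbT. Qed.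

End A4.

Section A5.
Variable R : rcfType.
Variables (m K : nat) (s : 'I_K -> nat) (B_ : forall l, 'M[R]_(m, s l)).


Definition Cw (w : 'I_K -> R) : 'M[R]_(m, \sum_l s l) :=
  \mxrow_l (Num.sqrt (w l) *: B_ l).

Lemma CCT w : (forall l, 0 <= w l) -> Cw w *m (Cw w)^T = Nw B_ w.
Proof.
move=> w0; rewrite /Cw tr_mxrow mul_mxrow_mxcol /Nw; apply: eq_bigr => l _.
rewrite linearZ /= -scalemxAl -scalemxAr scalerA -expr2 sqr_sqrtr //.
Qed.

Lemma BBT : Bfull B_ *m (Bfull B_)^T = \sum_l B_ l *m (B_ l)^T.
Proof. by rewrite /Bfull tr_mxrow mul_mxrow_mxcol. Qed.

Lemma tr_bound (S : 'M[R]_m) (al : R) w : in_simplex w ->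
  (forall l, \tr ((B_ l)^T *m S *m B_ l) <= al) ->
  \tr ((Cw w)^T *m S *m Cw w) <= al.
Proof.
move=> [w0 w1] hl.
rewrite mxtrace_mulC. rewrite (mulmxA (Cw w)) CCT // /Nw mulmx_suml raddf_sum /=.
apply: (le_trans (_ : _ <= \sum_l w l * al)).
  apply: ler_sum => l _; rewrite -scalemxAl mxtraceZ; apply: ler_wpM2l => //.
  by rewrite -mulmxA mxtrace_mulC.
by rewrite -mulr_suml w1 mul1r.
Qed.

Lemma NXC p (C : 'M[R]_(m, p)) (X N : 'M[R]_m) :
  C *m C^T = N -> N *m X *m N = N -> (N *m X)^T = N *m X -> N *m X *m C = C.
Proof.
move=> hC h1 h2.
apply/eqP; rewrite -subr_eq0; apply/eqP; apply: mxmxT_eq0.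
rewrite linearB /= trmx_mul h2.
have e1 : N *m X *m C *m (C^T *m (N *m X)) = N *m N *m X.
  by rewrite !(mulmxA _ _ (N *m X)) -(mulmxA _ C C^T) hC h1 mulmxA.
have e2 : N *m X *m C *m C^T = N by rewrite -mulmxA hC h1.
have e3 : C *m (C^T *m (N *m X)) = N *m N *m X by rewrite mulmxA hC mulmxA.
rewrite mulmxBl !mulmxBr e1 e2 e3 hC.
by rewrite opprB addrC addrA addrNK subrr.
Qed.
End A5.

Theorem theorem1 (R : rcfType) (n m N K : nat)
  (hm : (2 <= m)%N) (hmN : (m <= N)%N) (hNn : (N <= n)%N) (hK : (0 < K)%N)
  (f : 'I_n -> 'cV[R]_m)
  (hspan : row_full (\matrix_(i < n) (f i)^T))
  (s : 'I_K -> nat) (B_ : forall l : 'I_K, 'M[R]_(m, s l))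
  (hBrank : \rank (Bfull B_) = m)
  (hBcol : forall (l : 'I_K) (c : 'I_(s l)), col c (B_ l) != 0)
  (d0 : 'I_n -> bool) (hd0 : is_design N d0)
  (hd0inv : info_mx f d0 \in unitmx)
  (alpha : R) (halpha : alpha = PhiB B_ (info_mx f d0))
  (wstar : 'I_m -> 'I_K -> R)
  (hwstar : forall j : 'I_m,
     [/\ in_simplex (wstar j),
         ((unitv j)^T <= (Nw B_ (wstar j))^T)%MS &
         forall w : 'I_K -> R, in_simplex w ->
           ((unitv j)^T <= (Nw B_ w)^T)%MS ->
           mpinv (Nw B_ (wstar j)) j j <= mpinv (Nw B_ w) j j])
  (dstar : 'I_n -> bool) (hdstar : is_design N dstar)
  (hdstarinv : info_mx f dstar \in unitmx)
  (hopt : forall d : 'I_n -> bool, is_design N d -> info_mx f d \in unitmx ->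
     PhiB B_ (info_mx f dstar) <= PhiB B_ (info_mx f d)) :
  let Sigma := invmx (info_mx f dstar) in
  let BBinv := invmx (Bfull B_ *m (Bfull B_)^T) in
  forall j k : 'I_m,
  [/\ `|Sigma j k| <= alpha * K%:R * Num.sqrt (BBinv j j * BBinv k k),
      `|Sigma j k| <= alpha * Num.sqrt (mpinv (Nw B_ (wplus B_ j)) j j
                                        * mpinv (Nw B_ (wplus B_ k)) k k) &
      `|Sigma j k| <= alpha * Num.sqrt (mpinv (Nw B_ (wstar j)) j j
                                        * mpinv (Nw B_ (wstar k)) k k)].
Proof.
move=> Sigma BBinv j k.
set F := \matrix_(i < n) (if dstar i then (f i)^T else 0).
have hM : info_mx f dstar = F^T *m F by exact: info_gram.
have u : F^T *m F \in unitmx by rewrite -hM.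
set G := F *m Sigma.
have hS : Sigma = G^T *m G by rewrite /G /Sigma hM; exact: gram u.
have hal : forall l, \tr ((B_ l)^T *m Sigma *m B_ l) <= alpha.
  move=> l; rewrite halpha; apply: le_trans (hopt d0 hd0 hd0inv).
  exact: (bigmax_ge (fun l => \tr ((B_ l)^T *m invmx (info_mx f dstar) *m B_ l)) l).
have al0 : 0 <= alpha by rewrite halpha; exact: bigmax_ge0.
have gen : forall (w : 'I_K -> R) (X : 'M[R]_m) (i : 'I_m), in_simplex w ->
    (Nw B_ w *m X)^T = Nw B_ w *m X -> Nw B_ w *m X *m unitv i = unitv i ->
    Sigma i i <= alpha * X i i.
  move=> w X i hw h2 h3.
  have w0 := hw.1.
  rewrite -(CCT B_ w0) in h2 h3.
  have [h h0] := key G h2 h3.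
  rewrite -hS !ejAej in h h0.
  apply: le_trans h _; apply: (ler_wpM2r h0); exact: tr_bound.
have cs_ent : Sigma j k ^+ 2 <= Sigma j j * Sigma k k.
  by rewrite hS !gram_entry; exact: cs.
have d0i : forall i, 0 <= Sigma i i.
  move=> i; rewrite hS gram_entry; apply: sumr_ge0 => x _; rewrite -expr2.
  exact: sqr_ge0.
have Kn0 : K%:R != 0 :> R by rewrite pnatr_eq0 -lt0n.
have uB : Bfull B_ *m (Bfull B_)^T \in unitmx.
  by apply: rowfree_unit; rewrite /row_free hBrank.
pose wu := fun _ : 'I_K => (K%:R : R)^-1.
have hwu : in_simplex wu.
  split => [l|]; first by rewrite /wu invr_ge0 ler0n.
  by rewrite /wu sumr_const card_ord -(mulr_natr ((K%:R : R)^-1)) mulVf.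
have Nu : Nw B_ wu = (K%:R : R)^-1 *: (Bfull B_ *m (Bfull B_)^T).
  by rewrite BBT /Nw scaler_sumr.
have NX : Nw B_ wu *m (K%:R *: BBinv) = 1%:M.
  by rewrite Nu -scalemxAl -scalemxAr scalerA mulVf // scale1r mulmxV.
have b1 : forall i, Sigma i i <= alpha * (K%:R * BBinv i i).
  move=> i; have := gen wu (K%:R *: BBinv) i hwu.
  rewrite NX trmx1 mul1mx mxE => H; exact: H.
have b3 : forall i, Sigma i i <= alpha * (1 * mpinv (Nw B_ (wstar i)) i i).
  move=> i; have [hs hsub _] := hwstar i.
  have [h1 h2 h3 h4] := mpinvP (Nw B_ (wstar i)).
  rewrite mul1r; apply: gen hs h3 _.
  move/submxP: hsub => [D hD].
  have -> : unitv i = Nw B_ (wstar i) *m D^T.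
    by rewrite -[unitv i]trmxK hD trmx_mul trmxK.
  by rewrite mulmxA h1.
set Bf := Bfull B_.
have [p1 p2 p3 p4] := mpinvP Bf.
have BBp : Bf *m mpinv Bf = 1%:M.
  have e : Bf *m (Bf^T *m invmx (Bf *m Bf^T)) = 1%:M by rewrite mulmxA mulmxV.
  by rewrite -[X in X = _]mulmx1 -{1}e !mulmxA p1 -mulmxA e.
have vn0 : forall p (v : 'cV[R]_p), 0 <= vnorm v by move=> p v; exact: sqrtr_ge0.
have vnz : forall p (v : 'cV[R]_p), vnorm v = 0 -> v = 0.
  move=> p v /eqP; rewrite sqrtr_eq0 => hle.
  have hz : \sum_i v i 0 ^+ 2 = 0.
    by apply/eqP; rewrite eq_le hle sumr_ge0 // => x _; exact: sqr_ge0.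
  apply/matrixP => a b; rewrite (ord1 b) mxE.
  exact: (sumsq_eq0 hz a).
have b2 : forall i, Sigma i i <= alpha * (1 * mpinv (Nw B_ (wplus B_ i)) i i).
  move=> i; rewrite mul1r.
  set h := mpinv Bf *m unitv i.
  set S := \sum_t vnorm (submxcol h t).
  have eh : Bf *m h = unitv i by rewrite /h mulmxA BBp mul1mx.
  have S0 : S != 0.
    apply/negP => /eqP hS0.
    have ht : forall t, submxcol h t = 0.
      move=> t; apply: vnz.
      by apply: (psumr_eq0P _ hS0) => // x _; exact: vn0.
    have hh : h = 0.
      by rewrite -(submxcolK h); under eq_mxcol do rewrite ht; rewrite mxcol0.
    have := congr1 (fun M : 'cV[R]_m => M i 0) eh.
    by rewrite hh mulmx0 !mxE eqxx /= => /eqP; rewrite eq_sym oner_eq0.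
  have wdef : wplus B_ i = fun l => vnorm (submxcol h l) / S by [].
  have hw : in_simplex (wplus B_ i).
    split; first by move=> l; rewrite wdef divr_ge0 // sumr_ge0.
    by rewrite wdef -mulr_suml mulfV.
  have [q1 q2 q3 q4] := mpinvP (Nw B_ (wplus B_ i)).
  have nc := NXC (CCT B_ hw.1) q1 q3.
  apply: (gen _ _ _ hw q3).
  pose w := wplus B_ i.
  pose y := \mxcol_l ((Num.sqrt (w l))^-1 *: submxcol h l).
  have ey : unitv i = Cw B_ w *m y.
    rewrite -eh /Cw /Bf /Bfull mul_mxrow_mxcol -{1}(submxcolK h) mul_mxrow_mxcol.
    apply: eq_bigr => l _.
    rewrite -scalemxAl -scalemxAr scalerA.
    case: (eqVneq (w l) 0) => [wl0|wl0].
      have : submxcol h l = 0.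
        apply: vnz; move: wl0; rewrite /w wdef => /eqP.
        by rewrite mulf_eq0 invr_eq0 (negbTE S0) orbF => /eqP.
      by move=> ->; rewrite !mulmx0 scaler0.
    rewrite mulfV ?scale1r //.
    by rewrite sqrtr_eq0 -ltNge lt_def wl0 (hw.1 l).
  by rewrite ey mulmxA nc.
split.
- exact: combine al0 (ler0n _ K) cs_ent (d0i j) (d0i k) (b1 j) (b1 k).
- by have := combine al0 ler01 cs_ent (d0i j) (d0i k) (b2 j) (b2 k); rewrite mulr1.
- by have := combine al0 ler01 cs_ent (d0i j) (d0i k) (b3 j) (b3 k); rewrite mulr1.
Qed.
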